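(* Let $n\ge1$ and $\varepsilon_1,\dots,\varepsilon_n\in\{-1,1\}$ with at least one $\varepsilon_i=-1$. Put $a=n-\max\{i:\varepsilon_i=-1\}$. Then $\mathcal S(\varepsilon_1,\dots,\varepsilon_n,1)=(-1)^a\binom{n-1}{a}\,2^{\otimes n}$ in $V^{\otimes n}$.
   Context: Let $V=\mathbb Q^\times\otimes_{\mathbb Z}\mathbb Q$ (torsion, in particular $-1$, becomes $0$); for $f\in\mathbb Q^\times$ write $f$ for its image in $V$. Tensors in $V^{\otimes n}$ are multilinear in the multiplicative sense, and any formal tensor having the number $0$ as a factor is interpreted as $0$. $2^{\otimes n}=2\otimes\cdots\otimes2$. Define $\mu(x,y)=1-y/x$ if $x\ne0$, $\mu(0,y)=y$. For a tuple $(a_1,\dots,a_m)$, $m\ge2$ (the decorated polygon $P(a_1,\dots,a_m)$ with root decoration $a_m$, attached to $G(a_{m-1},\dots,a_1;a_m)$), define $\mathcal S(a_1,\dots,a_m)\in V^{\otimes(m-1)}$ by $\mathcal S(a_1,a_2)=\mu(a_1,a_2)$ and, for $m\ge3$, $\mathcal S(a_1,\dots,a_m)=\sum_{i=1}^{m-1}\mathcal S(a_1,\dots,\widehat{a_i},\dots,a_m)\otimes\mu(a_i,a_{i+1})-\sum_{i=2}^{m-1}\mathcal S(a_1,\dots,\widehat{a_i},\dots,a_m)\otimes\mu(a_i,a_{i-1})$. *)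

(* Defs.v *)
From HB Require Import structures.
From mathcomp Require Import all_boot all_order all_algebra.
Set Implicit Arguments. Unset Strict Implicit. Unset Printing Implicit Defensive.
Import Order.TTheory GRing.Theory Num.Theory.
Local Open Scope ring_scope.

(* Model of V = Q^x (x)_Z Q : the Q-vector space with basis e_p, p prime;
   the image of f in Q^x is sum_p v_p(f) e_p.  Hence V^{(x)n} has basis the
   words (p_1,...,p_n) of primes, and we represent an element of the tensor
   powers as a function  seq nat -> rat  (coefficient of each word).
   A word of length n only carries coefficients for elements of V^{(x)n}.
   Non-prime letters always get coefficient 0 since logn p _ = 0 then. *)
Definition tensor := seq nat -> rat.

(* p-adic valuation of a rational, as a rational; vq p 0 = 0, so any
   formal tensor with a factor 0 is 0 (matching the convention). *)
Definition vq (p : nat) (f : rat) : rat :=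
  ((Posz (logn p `|numq f|%N)) - (Posz (logn p `|denq f|%N)))%:~R.

Definition pt (l : seq rat) : tensor := fun w =>
  if size w == size l then \prod_(i < size l) vq (nth 0%N w i) (nth 0 l i)
  else 0.

Definition tens (X : tensor) (f : rat) : tensor := fun w =>
  if w is x :: w' then X (belast x w') * vq (last x w') f else 0.

Definition mu (x y : rat) : rat := if x == 0 then y else 1 - y / x.

Definition drop_at (i : nat) (a : seq rat) : seq rat :=
  take i a ++ drop i.+1 a.

(* S with fuel k (fuel = size a suffices) *)
Fixpoint Saux (k : nat) (a : seq rat) : tensor :=
  match k with
  | 0%N => fun _ => 0
  | k'.+1 =>
    if (size a <= 2)%N then
      (if size a == 2%N then pt [:: mu (nth 0 a 0) (nth 0 a 1)] else fun _ => 0)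
    else fun w =>
      \sum_(i < (size a).-1)
          tens (Saux k' (drop_at i a)) (mu (nth 0 a i) (nth 0 a i.+1)) w
      - \sum_(1 <= i < (size a).-1)
          tens (Saux k' (drop_at i a)) (mu (nth 0 a i) (nth 0 a i.-1)) w
  end.

Definition S (a : seq rat) : tensor := Saux (size a) a.

(* Main.v *)
Require Import Defs.
From HB Require Import structures.
From mathcomp Require Import all_boot all_order all_algebra.
From mathcomp Require Import zify ring lra.
Import Order.TTheory GRing.Theory Num.Theory.
Local Open Scope ring_scope.

Definition E (j : nat) (w : seq nat) : rat := (w == nseq j 2%N)%:R.

Lemma vq0 p : vq p 0 = 0.
Proof. by rewrite /vq; have -> : numq (0:rat) = 0 by []; have -> : denq (0:rat) = 1 by []; rewrite /= logn0 logn1. Qed.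

Lemma vq2 p : vq p 2 = (p == 2%N)%:R.
Proof.
rewrite /vq; have -> : numq (2:rat) = 2 by []; have -> : denq (2:rat) = 1 by [].
rewrite /= logn1 subr0.
case: eqP => [->|ne]; first by [].
rewrite lognE; case: (boolP [&& _, _ & _]) => // /and3P[pp _ d].
have := dvdn_leq (isT : (0 < 2)%N) d; have := prime_gt1 pp; lia.
Qed.

Lemma ptE j w : pt (nseq j 2) w = E j w.
Proof.
rewrite /pt /E size_nseq.
case: eqP => [sz|ne]; last first.
  by case: eqP => // e; rewrite e size_nseq in ne.
under eq_bigr => i _ do rewrite nth_nseq ltn_ord vq2.
elim: j w sz => [|j IH] [|x w] //= sz.
  by rewrite big_ord0.
case: sz => sz.
rewrite big_ord_recl /= IH // eqseq_cons; case: (x == 2%N); rewrite ?mul1r ?mul0r //.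
Qed.

Lemma tens0 X w : tens X 0 w = 0.
Proof. by case: w => [|x w] //=; rewrite vq0 mulr0. Qed.

Lemma tens_ext X Y f w : (forall v, X v = Y v) -> tens X f w = tens Y f w.
Proof. by move=> h; case: w => //= x w; rewrite h. Qed.

Lemma nseqS_rcons j (x : nat) : nseq j.+1 x = rcons (nseq j x) x.
Proof. by elim: j => //= j ->. Qed.

Lemma tens2 X c j w : (forall v, X v = c * E j v) -> tens X 2 w = c * E j.+1 w.
Proof.
move=> h; case: w => [|x w] /=; first by rewrite /E /= mulr0.
rewrite h vq2 /E -mulrA -natrM; congr (_ * _%:R).
by rewrite (lastI x w) nseqS_rcons eqseq_rcons mulnb.
Qed.

Lemma mu_pm x y : (x = 1 \/ x = -1) -> (y = 1 \/ y = -1) ->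
  mu x y = if x == y then 0 else 2.
Proof.
by rewrite /mu => [[]->[]->]; rewrite ?eqxx ?oppr_eq0 ?oner_eq0 //=;
  rewrite ?divr1 ?divN1 ?divrN ?divr1 ?opprK ?subrr //; rewrite ?(_ : (1:rat) == -1 = false) ?(_ : (-1:rat) == 1 = false) //.
Qed.

Lemma size_drop_at i a : (i < size a)%N -> size (drop_at i a) = (size a).-1.
Proof. by move=> h; rewrite /drop_at size_cat size_take size_drop h; lia. Qed.

Lemma nth_drop_at i a j : (i < size a)%N ->
  nth 0 (drop_at i a) j = nth 0 a (if (j < i)%N then j else j.+1).
Proof.
move=> h; rewrite /drop_at nth_cat size_take h.
case: ltnP => hj; first by rewrite nth_take.
by rewrite nth_drop; congr nth; lia.
Qed.

Lemma S_drop i a : (i < size a)%N -> S (drop_at i a) = Saux (size a).-1 (drop_at i a).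
Proof. by move=> h; rewrite /S size_drop_at. Qed.

Lemma S_rec a w : (2 < size a)%N ->
  S a w = \sum_(0 <= i < (size a).-1)
          tens (S (drop_at i a)) (mu (nth 0 a i) (nth 0 a i.+1)) w
      - \sum_(1 <= i < (size a).-1)
          tens (S (drop_at i a)) (mu (nth 0 a i) (nth 0 a i.-1)) w.
Proof.
move=> h; rewrite {1}/S; case ha: (size a) h => [|m] // h.
rewrite /= ifN; last by rewrite ha -ltnNge.
rewrite ha big_mkord; congr (_ - _).
  by apply: eq_bigr => i _; rewrite S_drop ?ha //; have := ltn_ord i; rewrite /=; lia.
by apply: eq_big_nat => i hi; rewrite S_drop ?ha //; move: hi => /=; lia.
Qed.

Definition pm (a : seq rat) := forall i, (i < size a)%N -> nth 0 a i = 1 \/ nth 0 a i = -1.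

Definition U a i w :=
  tens (S (drop_at i a)) (mu (nth 0 a i) (nth 0 a i.+1)) w
  - tens (S (drop_at i a)) (mu (nth 0 a i) (nth 0 a i.-1)) w.

Lemma S_rec2 a w : (2 < size a)%N -> pm a ->
  S a w = \sum_(0 <= i < (size a).-1) U a i w.
Proof.
move=> h p; rewrite S_rec // /U sumrB [X in _ = _ - X](@big_ltn _ _ _ 0) /=; last by lia.
rewrite mu_pm ?eqxx; try (apply: p; lia).
by rewrite tens0 add0r.
Qed.

Lemma sum0 (lo hi : nat) (F : nat -> rat) :
  (forall i, (lo <= i < hi)%N -> F i = 0) -> \sum_(lo <= i < hi) F i = 0.
Proof. by move=> h; rewrite big_nat_cond big1 // => i /andP[hi' _]; exact: h. Qed.

Lemma mu11 : mu 1 1 = 0.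
Proof. by rewrite /mu oner_eq0 divr1 subrr. Qed.

Lemma A_ones a w : (1 < size a)%N -> (forall i, (i < size a)%N -> nth 0 a i = 1) -> S a w = 0.
Proof.
move=> h1 h; have p : pm a by move=> i /h ->; left.
have [hs|hs] : (size a = 2)%N \/ (2 < size a)%N by lia.
  rewrite /S hs /= hs /= (h 0%N) ?(h 1%N) ?mu11; try lia.
  rewrite /pt /=; case: (_ == _) => //; rewrite big_ord1 vq0 //.
rewrite S_rec2 // sum0 // => i /andP[_ hh]; rewrite /U.
rewrite (h i) ?(h i.+1) ?(h i.-1) ?mu11 ?tens0 ?subr0 //. all: move: hh; move: (size a) => s hh; lia.
Qed.

Lemma tens_mu X c j (x y : rat) w : (forall v, X v = c * E j v) ->
  (x = 1 \/ x = -1) -> (y = 1 \/ y = -1) ->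
  tens X (mu x y) w = (x != y)%:R * c * E j.+1 w.
Proof.
move=> hX hx hy; rewrite mu_pm //; case: (x == y) => /=.
  by rewrite tens0 !mul0r.
by rewrite (@tens2 _ _ _ _ hX) mul1r.
Qed.

Lemma Uform a i c j w : (i.+1 < size a)%N -> pm a ->
  (forall v, S (drop_at i a) v = c * E j v) ->
  U a i w = ((nth 0 a i.+1 != nth 0 a i)%:R - (nth 0 a i != nth 0 a i.-1)%:R) * c * E j.+1 w.
Proof.
move=> hi p hX; rewrite /U !(@tens_mu _ _ _ _ _ _ hX); try (apply: p; move: hi; move: (size a) => s hi; lia).
by rewrite eq_sym !mulrBl.
Qed.

Definition f k t : rat := (-1) ^+ (t.-1) * ('C(k + t.-1, t.-1))%:R.

Lemma f_rec1 k t : f k.+1 t.+2 = f k t.+2 - f k.+1 t.+1.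
Proof.
rewrite /f /= addSn binS natrD addSnnS exprS; ring.
Qed.

Lemma f_rec2 t : f 0 t.+2 = - f 0 t.+1.
Proof. by rewrite /f /= !add0n !binn exprS; ring. Qed.

Lemma f_rec3 k : f k.+1 1 = f k 1.
Proof. by rewrite /f /= !bin0. Qed.

Lemma pm_drop a i : pm a -> (i < size a)%N -> pm (drop_at i a).
Proof.
move=> p hi j; rewrite size_drop_at // nth_drop_at // => hj; apply: p.
move: hi hj; move: (size a) => s hi hj; case: ifP => _; lia.
Qed.

Lemma neq_m11 : ((-1 : rat) != 1) && ((1 : rat) != -1).
Proof. by []. Qed.
Lemma B m : forall a k t, size a = m.+1 -> m = (k + t)%N -> (0 < t)%N -> pm a ->
  nth 0 a k = -1 -> (forall j, (k < j <= m)%N -> nth 0 a j = 1) ->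
  forall w, S a w = f k t * E m w.
Proof.
elim: m => [|m IH] a k t sz hm ht p hk h1 w; first by lia.
have [m0|m1] : (m = 0)%N \/ (0 < m)%N by lia.
  subst m; have [k0 t1] : k = 0%N /\ t = 1%N by lia.
  subst k t.
  rewrite /S sz /= sz /= hk (h1 1%N) // mu_pm; [|by right|by left].
  rewrite (_ : (if (-1:rat) == 1 then 0 else 2) = 2) // (_ : [:: 2] = nseq 1 2) // ptE.
  by rewrite /f /= mul1r.
have IHd : forall i k' t', (i < m.+2)%N -> m = (k' + t')%N -> (0 < t')%N ->
    nth 0 (drop_at i a) k' = -1 ->
    (forall j, (k' < j <= m)%N -> nth 0 (drop_at i a) j = 1) ->
    forall v, S (drop_at i a) v = f k' t' * E m v.
  move=> i k' t' hi hm' ht' hk' h1'; apply: IH => //.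
    by rewrite size_drop_at ?sz.
  by apply: pm_drop; rewrite ?sz.
have n1 : (-1:rat) != 1 by []. have n2 : (1:rat) != -1 by [].
rewrite S_rec2 ?sz //=.
rewrite (@big_cat_nat _ _ _ k) //=; last by lia.
rewrite (@big_ltn _ _ _ k) //=; last by lia.
have HF : \sum_(0 <= i < k) U a i w + U a k w =
   (if k is k'.+1 then f k' t else 0) * E m.+1 w.
  case: k hk h1 hm => [|k] hk h1 hm.
    rewrite big_geq // add0r (@Uform a 0 0 m w) ?sz; [by rewrite !mulr0 mul0r | lia | exact p|].
    move=> v; rewrite mul0r; apply: A_ones; first by rewrite size_drop_at sz; lia.
    move=> j; rewrite size_drop_at ?sz // => hj; rewrite nth_drop_at ?sz //=; apply: h1; lia.
  have Hi : forall i, (i <= k)%N -> forall v, S (drop_at i a) v = f k t * E m v.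
    move=> i hi; apply: IHd; [lia | lia | done | |].
      by rewrite nth_drop_at ?sz; [rewrite ltnNge hi /= | lia].
    move=> j hj; rewrite nth_drop_at ?sz; last lia.
    case: ltnP => hji; [lia | apply: h1; lia].
  rewrite (telescope_sumr_eq (fun i => (nth 0 a i != nth 0 a i.-1)%:R * (f k t * E m.+1 w))) //=; last first.
    move=> i hi; rewrite (@Uform _ _ (f k t) m) ?sz; [|lia|exact p| apply: Hi; lia].
    by rewrite /= -mulrA mulrBl.
  rewrite eqxx mul0r subr0.
  have : (k < size a)%N by rewrite sz; lia.
  move=> /p [] ha.
    rewrite /U hk (h1 k.+2) /= ?ha; last lia.
    by rewrite subrr addr0 n1 mul1r.
  rewrite hk ha eqxx mul0r add0r (@Uform _ _ (f k t) m) ?sz; [|lia|exact p|].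
    by rewrite /= hk ha (h1 k.+2) ?eqxx ?n2 /=; [rewrite subr0 mul1r | lia].
  move=> v; apply: IHd; [lia | lia | done | |].
    by rewrite nth_drop_at ?sz ?ltnSn //; lia.
  move=> j hj; rewrite nth_drop_at ?sz; last lia.
  case: ltnP => hji; [lia | apply: h1; lia].
have HR : \sum_(k.+1 <= i < m.+1) U a i w =
   (if t is t'.+2 then - f k t'.+1 else 0) * E m.+1 w.
  case ht': t => [|[|t']]; first lia.
    by rewrite big_geq ?mul0r //; lia.
  rewrite big_ltn; last lia.
  rewrite sum0 ?addr0; last first.
    { move=> i /andP[hi1 hi2]; rewrite /U (h1 i) ?(h1 i.+1) ?(h1 i.-1) ?mu11 ?tens0 ?subr0 //.
    all: lia. }
  rewrite (@Uform _ _ (f k t'.+1) m) ?sz; [|lia|exact p|].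
    rewrite /= hk (h1 k.+1) ?(h1 k.+2) ?eqxx ?n2 /=; [ring | lia | lia].
  move=> v; apply: IHd; [lia | lia | done | |].
    by rewrite nth_drop_at ?sz ?ltnSn //; lia.
  move=> j hj; rewrite nth_drop_at ?sz; last lia.
  case: ltnP => hji; [lia | apply: h1; lia].
rewrite addrA HF HR -mulrDl; congr (_ * _).
case: k hm {HF HR hk h1} => [|k]; case: t ht => [|[|t]] //= _ hm; try lia.
- by rewrite add0r f_rec2.
- by rewrite addr0 f_rec3.
- by rewrite f_rec1.
Qed.

Theorem mainTheorem5 (n : nat) (eps : seq rat) (k : nat) :
  (1 <= n)%N ->
  size eps = n ->
  (forall i, (i < n)%N -> nth 0 eps i = 1 \/ nth 0 eps i = -1) ->
  (k < n)%N ->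
  nth 0 eps k = -1 ->
  (forall j, (k < j < n)%N -> nth 0 eps j = 1) ->
  forall w : seq nat,
    S (rcons eps 1) w
    = (-1) ^+ (n - k.+1) * ('C(n.-1, n - k.+1))%:R * pt (nseq n 2) w.
Proof.
move=> n1 sz hp hk hkv h1 w.
rewrite ptE (@B n (rcons eps 1) k (n - k)) ?size_rcons ?sz //; try lia.
- rewrite /f (_ : (n - k).-1 = n - k.+1)%N; last lia.
  by rewrite (_ : (k + (n - k.+1))%N = n.-1); last lia.
- move=> i; rewrite size_rcons nth_rcons sz => hi.
  case: ltnP => hin; first exact: hp.
  by rewrite (_ : i == n) ?eqxx; [left | apply/eqP; lia].
- by rewrite nth_rcons sz hk.
- move=> j /andP[hj1 hj2]; rewrite nth_rcons sz.
  case: ltnP => hjn; first by apply: h1; lia.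
  by rewrite (_ : j == n) //; apply/eqP; lia.
Qed.
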